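(* For any $\varepsilon>0$ there exist $\beta>1$ and $n_0$ such that every graph $G$ on $n\ge n_0$ vertices with $(\beta,\beta^{-1})$-expansion satisfies $\mathrm{spr}(G)<1/4+\varepsilon$.
   Context: For $T\subseteq V$, $N(T)$ is the set of vertices adjacent to some vertex of $T$. A graph $G=(V,E)$ has $(\beta,\eta)$-expansion if every $T\subset V$ with $|T|\le(1-\eta)|V|/\beta$ satisfies $|T\cup N(T)|\ge\beta|T|$. A Lipschitz function on $G$ is $f:V\to\mathbb{R}$ with $|f(v)-f(w)|\le1$ for adjacent $v,w$; $\mathrm{Var}(f)$ is the variance of $f(X)$ for $X$ uniform on $V$; $\mathrm{spr}(G)$ is the supremum of $\mathrm{Var}(f)$ over Lipschitz $f$. *)

(* Defs.v *)
From HB Require Import structures.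
From mathcomp Require Import all_boot all_order all_algebra.
From mathcomp Require Import all_classical all_reals ereal.
Set Implicit Arguments. Unset Strict Implicit. Unset Printing Implicit Defensive.
Import Order.TTheory GRing.Theory Num.Theory.
Local Open Scope ring_scope.

Definition simple_graph (V : finType) (e : rel V) : Prop :=
  symmetric e /\ irreflexive e.

Definition nbhd (V : finType) (e : rel V) (S : {set V}) : {set V} :=
  [set v | [exists u in S, e u v]].

Definition has_expansion (R : realType) (V : finType) (e : rel V)
    (beta eta : R) : Prop :=
  forall S : {set V}, S \proper [set: V] ->
    (#|S|%:R <= (1 - eta) * #|V|%:R / beta) ->
    beta * #|S|%:R <= #|S :|: nbhd e S|%:R.

Definition lipschitz (R : realType) (V : finType) (e : rel V) (f : V -> R) : Prop :=
  forall v w, e v w -> `|f v - f w| <= 1.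

Definition mean (R : realType) (V : finType) (f : V -> R) : R :=
  (\sum_(v : V) f v) / #|V|%:R.
Definition variance (R : realType) (V : finType) (f : V -> R) : R :=
  (\sum_(v : V) (f v - mean f) ^+ 2) / #|V|%:R.

Definition spr (R : realType) (V : finType) (e : rel V) : \bar R :=
  ereal_sup [set (variance f)%:E | f in [set f : V -> R | lipschitz e f]].

(* Main.v *)
Require Import Defs.
From HB Require Import structures.
From mathcomp Require Import all_boot all_order all_algebra.
From mathcomp Require Import all_classical all_reals ereal.
Import Order.TTheory GRing.Theory Num.Theory.
Local Open Scope ring_scope.

Module Helpers.
From mathcomp Require Import ring lra.
From mathcomp Require Import fintype finset.
Set Implicit Arguments. Unset Strict Implicit.


Lemma sub_card_ex (V : finType) (A : {set V}) (k : nat) :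
  (k <= #|A|)%N -> exists B : {set V}, B \subset A /\ #|B| = k.
Proof.
elim: k => [|k IH] hk.
  by exists set0; rewrite sub0set cards0.
have [B [sBA cB]] := IH (ltnW hk).
have : B \proper A by rewrite properEcard sBA cB hk.
case/properP=> _ [x xA xB].
exists (x |: B); split; first by rewrite subUset sub1set xA sBA.
by rewrite cardsU1 xB cB.
Qed.

Definition cl (V : finType) (e : rel V) (S : {set V}) := S :|: nbhd e S.

Lemma cl_sub (V : finType) (e : rel V) (A B : {set V}) :
  A \subset B -> cl e A \subset cl e B.
Proof.
move=> sAB; apply/subsetP => v; rewrite !inE => /orP[vA|].
  by rewrite (subsetP sAB) .
case/existsP=> u /andP[uA euv]; apply/orP; right.
by apply/existsP; exists u; rewrite (subsetP sAB) .
Qed.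

Lemma cl_lower (R : realType) (V : finType) (e : rel V) (f : V -> R) (s t : R) :
  lipschitz e f -> s + 1 <= t -> cl e [set v | f v < s] \subset [set v | f v < t].
Proof.
move=> lf st; apply/subsetP => v; rewrite !inE => /orP[h|].
  by lra.
case/existsP=> u /andP[]; rewrite inE => hu /lf.
rewrite ler_norml => /andP[h1 h2]; lra.
Qed.

Lemma cl_upper (R : realType) (V : finType) (e : rel V) (f : V -> R) (s t : R) :
  lipschitz e f -> t + 1 <= s -> cl e [set v | s < f v] \subset [set v | t < f v].
Proof.
move=> lf st; apply/subsetP => v; rewrite !inE => /orP[h|].
  by lra.
case/existsP=> u /andP[]; rewrite inE => hu /lf.
rewrite ler_norml => /andP[h1 h2]; lra.
Qed.

Lemma cl_le (R : realType) (V : finType) (e : rel V) (f : V -> R) (s : R) :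
  lipschitz e f -> cl e [set v | f v <= s] \subset [set v | f v <= s + 1].
Proof.
move=> lf; apply/subsetP => v; rewrite !inE => /orP[h|].
  by lra.
case/existsP=> u /andP[]; rewrite inE => hu /lf.
rewrite ler_norml => /andP[h1 h2]; lra.
Qed.

Lemma decay (R : realType) (V : finType) (e : rel V) (beta : R)
  (T : nat -> {set V}) : 0 <= beta ->
  (forall k, cl e (T k.+1) \subset T k) ->
  (forall k, beta * #|T k.+1|%:R <= #|cl e (T k.+1)|%:R) ->
  forall k, beta ^+ k * #|T k|%:R <= #|T 0%N|%:R.
Proof.
move=> b0 hcl hex; elim=> [|k IH]; first by rewrite expr0 mul1r.
apply: le_trans IH; rewrite exprSr -mulrA ler_wpM2l ?exprn_ge0 //.
apply: le_trans (hex k) _; rewrite ler_nat; exact: subset_leq_card.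
Qed.

Lemma disj_card (V : finType) (A B : {set V}) :
  (forall x, x \in A -> x \in B -> False) -> (#|A| + #|B| <= #|V|)%N.
Proof.
move=> d.
have I0 : A :&: B = set0.
  apply/setP => x; rewrite !inE; apply/negP => /andP[xa xb]; exact: d xa xb.
have := cardsUI A B; rewrite I0 cards0 addn0 => <-; exact: max_card.
Qed.


Lemma m_lt_n (R : realType) (beta n : R) : 1 < beta -> 0 < n ->
  (1 - beta^-1) * n / beta < n.
Proof.
move=> b1 n0.
have xp : 0 < beta^-1 by rewrite invr_gt0; lra.
have x1 : beta^-1 < 1 by rewrite invr_lt1 ?unitfE; lra.
set x := beta^-1 in xp x1 *.
nra.
Qed.

Lemma exp1 (R : realType) (V : finType) (e : rel V) (beta : R) :
  1 < beta -> (0 < #|V|)%N -> has_expansion e beta beta^-1 ->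
  forall S : {set V}, #|S|%:R <= (1 - beta^-1) * #|V|%:R / beta ->
  beta * #|S|%:R <= #|cl e S|%:R.
Proof.
move=> b1 n0 hexp S hS; apply: hexp => //.
rewrite properT; apply/negP => /eqP SE.
have np : 0 < #|V|%:R :> R by rewrite ltr0n.
have := m_lt_n b1 np.
rewrite SE cardsT in hS; lra.
Qed.

Lemma exp2 (R : realType) (V : finType) (e : rel V) (beta : R) :
  1 < beta -> (0 < #|V|)%N -> has_expansion e beta beta^-1 ->
  forall A : {set V}, (1 - beta^-1) * #|V|%:R / beta < #|A|%:R ->
  beta * ((1 - beta^-1) * #|V|%:R / beta) - beta < #|cl e A|%:R.
Proof.
move=> b1 n0 hexp A hA.
set m := (1 - beta^-1) * #|V|%:R / beta in hA *.
have m0 : 0 <= m.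
  have xp : 0 < beta^-1 by rewrite invr_gt0; lra.
  have x1 : beta^-1 < 1 by rewrite invr_lt1 ?unitfE; lra.
  rewrite /m; apply: mulr_ge0; last by rewrite invr_ge0; lra.
  apply: mulr_ge0; [lra | by rewrite ler0n].
have /andP[r1 r2] := truncn_itv m0.
set r := Num.truncn m in r1 r2.
have rA : (r <= #|A|)%N.
  rewrite -(ler_nat R); lra.
have [B [sBA cB]] := sub_card_ex rA.
have := exp1 b1 n0 hexp (S := B); rewrite cB => /(_ r1) h.
have h2 : (#|cl e B| <= #|cl e A|)%N by apply: subset_leq_card; apply: cl_sub.
rewrite -(ler_nat R) in h2.
have : beta * m - beta < beta * r%:R.
  have : m - 1 < r%:R by rewrite -natr1 in r2; lra.
  move=> h3; nra.
lra.
Qed.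


Lemma sqlem (R : realType) (K : nat) (d : R) : 0 <= d -> d <= K%:R ->
  (d + 1/2) ^+ 2 <= 1/4 + \sum_(k < K) (2 * k%:R + 2) * ((k%:R < d)%R : nat)%:R.
Proof.
elim: K d => [|K IH] d d0 dK.
  rewrite big_ord0; have -> : d = 0 by lra.
  rewrite expr2; lra.
rewrite big_ord_recr /=.
have [dK'|dK'] := lerP d K%:R.
  by rewrite mulr0 addr0; exact: IH.
rewrite mulr1.
have K0 : 0 <= K%:R :> R by rewrite ler0n.
have := IH K%:R K0 (lexx _).
have -> : \sum_(i < K) (2 * (i : nat)%:R + 2) * (((i : nat)%:R < K%:R :> R)%R : nat)%:R
       = \sum_(i < K) (2 * (i : nat)%:R + 2) * (((i : nat)%:R < d)%R : nat)%:R :> R.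
  apply: eq_bigr => i _.
  have iK : (i : nat)%:R < K%:R :> R by rewrite ltr_nat.
  have id : (i : nat)%:R < d by lra.
  by rewrite iK id.
rewrite -natr1 in dK.
move=> h; rewrite !expr2 in h *; nra.
Qed.

Lemma geom (R : realType) (x : R) : 0 <= x -> x <= 1/2 -> forall K : nat,
  \sum_(k < K) (2 * k%:R + 2) * x ^+ k + (4 * K%:R + 8) * x ^+ K <= 8.
Proof.
move=> x0 x1; elim=> [|K IH].
  by rewrite big_ord0 expr0; lra.
rewrite big_ord_recr /= exprSr -natr1.
have K0 : 0 <= K%:R :> R by rewrite ler0n.
have xK : 0 <= x ^+ K by rewrite exprn_ge0.
set y := x ^+ K in IH xK *.
set S := \sum_(i < K) _ in IH *.
have : (4 * K%:R + 12) * y * x <= (4 * K%:R + 12) * y * (1/2).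
  apply: ler_wpM2l => //; apply: mulr_ge0 => //; lra.

nra.
Qed.

Lemma var_le (R : realType) (V : finType) (f : V -> R) (c : R) :
  (0 < #|V|)%N ->
  \sum_(v : V) (f v - mean f) ^+ 2 <= \sum_(v : V) (f v - c) ^+ 2.
Proof.
move=> n0.
set mu := mean f.
have n0' : #|V|%:R != 0 :> R by rewrite pnatr_eq0 -lt0n.
have hs : \sum_(v : V) f v = #|V|%:R * mu.
  by rewrite /mu /mean mulrC divfK.
rewrite -subr_ge0 -sumrB.
have -> : \sum_(v : V) ((f v - c) ^+ 2 - (f v - mu) ^+ 2)
   = \sum_(v : V) ((2 * (mu - c)) * f v + (c ^+ 2 - mu ^+ 2)).
  by apply: eq_bigr => v _; ring.
rewrite big_split /= -mulr_sumr hs sumr_const.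
rewrite (_ : #|xpredT| = #|V|) //.
rewrite -[X in _ + X]mulr_natl.
have -> : 2 * (mu - c) * (#|V|%:R * mu) + #|V|%:R * (c ^+ 2 - mu ^+ 2)
   = #|V|%:R * (mu - c) ^+ 2 by ring.
apply: mulr_ge0; [by rewrite ler0n | exact: sqr_ge0].
Qed.

Lemma sum_ind (R : realType) (V : finType) (A : {set V}) :
  \sum_(v : V) ((v \in A) : nat)%:R = #|A|%:R :> R.
Proof.
rewrite (bigID (fun v => v \in A)) /=.
rewrite [X in _ + X]big1 ?addr0; last by move=> v /negbTE ->.
rewrite (eq_bigr (fun _ => 1)); last by move=> v ->.
by rewrite sumr_const -[in RHS](card_imset (f := id)) // imset_id.
Qed.


Lemma var_bound (R : realType) (V : finType) (e : rel V) (beta : R) (f : V -> R) :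
  4 <= beta -> 4 * beta <= #|V|%:R -> has_expansion e beta beta^-1 ->
  lipschitz e f ->
  variance f <= 1/4 + 16 * (beta^-1 + beta / #|V|%:R).
Proof.
move=> b4 nb hexp lf.
have b1 : 1 < beta by lra.
have nposN : (0 < #|V|)%N by rewrite -(ltr_nat R); lra.
have b0 : beta != 0 by rewrite gt_eqF //; lra.
have xp : 0 < beta^-1 by rewrite invr_gt0; lra.
have x4 : beta^-1 <= 1/4.
  rewrite -[beta^-1]mul1r ler_pdivrMr; lra.
set n := #|V|%:R in nb *.
have n0 : 0 <= n by rewrite /n ler0n.
set m := (1 - beta^-1) * n / beta.
have bm : beta * m = n - n * beta^-1 by rewrite /m; field.
have m0 : 0 <= m by rewrite /m; apply: mulr_ge0; [apply: mulr_ge0 => //; lra | lra].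
have mn : m <= n * beta^-1.
  have -> : m = n * beta^-1 - n * beta^-1 * beta^-1 by rewrite /m; ring.
  have : 0 <= n * beta^-1 * beta^-1 by apply: mulr_ge0; [apply: mulr_ge0|]; lra.
  lra.
have nx4 : n * beta^-1 <= n / 4 by rewrite ler_wpM2l //; lra.
case/card_gt0P: nposN => v1 _.
pose Q := [pred v | #|[set w | f w < f v]|%:R <= m].
have [vm _ vmmin] := arg_minP (P := xpredT) (i0 := v1) f isT.
have Qvm : Q vm.
  rewrite inE (_ : #|_| = 0%N) //.
  apply/eqP; rewrite cards_eq0; apply/eqP/setP => w; rewrite !inE.
  by apply/negbTE; rewrite -leNgt; exact: vmmin.
have [v0 Qv0 v0max] := arg_maxP (P := Q) (i0 := vm) f Qvm.
set p := f v0.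
have HL0 : #|[set w | f w < p]|%:R <= m by move: Qv0; rewrite inE.
have HA : m < #|[set w | f w <= p]|%:R.
  rewrite ltNge; apply/negP => hA.
  case: (pickP [pred w | p < f w]) => [w1 hw1 | none]; last first.
    have : [set w | f w <= p] = [set: V].
      apply/setP => w; rewrite !inE; have := none w; rewrite /= => /negbT.
      by rewrite -leNgt.
    move=> E; rewrite E cardsT in hA.
    have := m_lt_n b1 (_ : 0 < n); rewrite -/m.
    move=> h; have : 0 < n by rewrite /n ltr0n; apply/card_gt0P; exists v1.
    move/h; lra.
  have [w2 hw2 w2min] := arg_minP (P := [pred w | p < f w]) (i0 := w1) f hw1.
  have E : [set w | f w < f w2] = [set w | f w <= p].
    apply/setP => w; rewrite !inE; apply/idP/idP => h.
      rewrite leNgt; apply/negP => pw; have := w2min w pw; lra.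
    move: hw2; rewrite inE => hw2; lra.
  have Qw2 : Q w2 by rewrite inE E.
  move: (v0max w2 Qw2) => /= h1; move: hw2 => /= hw2; rewrite /p in hw2; lra.
have npos : 0 < n by rewrite /n ltr0n; apply/card_gt0P; exists v1.
have nposN : (0 < #|V|)%N by apply/card_gt0P; exists v1.
pose A := [set w | f w <= p].
have hclA := exp2 b1 nposN hexp HA.
rewrite -/m bm in hclA.
have clA : cl e A \subset [set w | f w <= p + 1] by apply: cl_le.
pose U (k : nat) := [set w | p + 1 + k%:R < f w].
pose L (k : nat) := [set w | f w < p - k%:R].
have clU : forall k, cl e (U k.+1) \subset U k.
  move=> k; apply: cl_upper => //; rewrite -natr1; lra.
have clL : forall k, cl e (L k.+1) \subset L k.
  move=> k; apply: cl_lower => //; rewrite -natr1; lra.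
have U0 : #|U 0%N|%:R < n * beta^-1 + beta.
  have : (#|U 0%N| + #|cl e A| <= #|V|)%N.
    apply: disj_card => w h1 h2.
    have := subsetP clA w h2; move: h1; rewrite !inE; lra.
  rewrite -(ler_nat R) natrD -/n; lra.
have U1 : #|U 1%N|%:R <= m.
  rewrite leNgt; apply/negP => hU.
  have := exp2 b1 nposN hexp hU; rewrite -/m bm => hU'.
  have : (#|cl e A| + #|cl e (U 1%N)| <= #|V|)%N.
    apply: disj_card => w h1 h2.
    have := subsetP clA w h1; have := subsetP (clU 0%N) w h2; rewrite !inE; lra.
  rewrite -(ler_nat R) natrD -/n => h.
  lra.
pose B := n * beta^-1 + beta.
have be0 : 0 <= beta by lra.
have hLk : forall k, beta ^+ k * #|L k|%:R <= B.
  move=> k; apply: le_trans (decay be0 clL _ k) _.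
    move=> j; apply: exp1 => //; apply: le_trans HL0.
    rewrite ler_nat; apply: subset_leq_card; apply/subsetP => w; rewrite !inE.
    have : 0 <= j.+1%:R :> R by rewrite ler0n.
    lra.
  have : #|L 0%N|%:R <= m.
    apply: le_trans HL0; rewrite ler_nat; apply: subset_leq_card.
    by apply/subsetP => w; rewrite !inE; lra.
  rewrite /B; lra.
have hUk : forall k, beta ^+ k * #|U k|%:R <= B.
  move=> k; apply: le_trans (decay be0 clU _ k) _.
    move=> j; apply: exp1 => //; apply: le_trans U1.
    rewrite ler_nat; apply: subset_leq_card; apply/subsetP => w; rewrite !inE.
    have : 0 <= j%:R :> R by rewrite ler0n.
    rewrite -natr1; lra.
  rewrite /B; lra.
have hx : forall (k : nat) (c : R), beta ^+ k * c <= B -> c <= B * beta^-1 ^+ k.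
  move=> k c h.
  have -> : c = beta^-1 ^+ k * (beta ^+ k * c).
    by rewrite mulrA -exprMn mulVf // expr1n mul1r.
  rewrite mulrC ler_wpM2r // exprn_ge0 //; lra.
pose K := (Num.truncn (\sum_(v : V) `|f v - p|)).+1.
have hK : forall v, `|f v - p| <= K%:R.
  move=> v; apply: le_trans (ltW (truncnS_gt _)).
  rewrite (bigD1 v) //= lerDl; apply: sumr_ge0 => i _; exact: normr_ge0.
pose g (v : V) (k : nat) : R :=
  (2 * k%:R + 2) * (((v \in L k) : nat)%:R + ((v \in U k) : nat)%:R).
have hpt : forall v, (f v - (p + 1/2)) ^+ 2 <= 1/4 + \sum_(k < K) g v k.
  move=> v; have := hK v; rewrite ler_norml => /andP[k1 k2].
  have hge : forall (d : R), (forall k : nat, k%:R < d -> (v \in L k) || (v \in U k)) ->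
     \sum_(k < K) (2 * k%:R + 2) * ((k%:R < d)%R : nat)%:R <= \sum_(k < K) g v k.
    move=> d hd; apply: ler_sum => k _; rewrite /g.
    have k0 : 0 <= (k : nat)%:R :> R by rewrite ler0n.
    apply: ler_wpM2l; first lra.
    case: ltrP => hk /=; last by apply: addr_ge0; rewrite ler0n.
    have := hd k hk; case: (v \in L k); case: (v \in U k) => //= _; lra.
  have [hlo|hlo] := ltrP (f v) p.
    have h1 := sqlem (K := K) (d := p - f v) ltac:(lra) ltac:(lra).
    have h2 := hge (p - f v) (fun k hk => introT orP (or_introl
       (ltac:(rewrite inE; lra) : v \in L k))).
    have -> : (f v - (p + 1/2)) ^+ 2 = (p - f v + 1/2) ^+ 2 by ring.
    lra.
  have [hhi|hhi] := lerP (f v) (p + 1).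
    have : 0 <= \sum_(k < K) g v k.
      apply: sumr_ge0 => k _; rewrite /g; apply: mulr_ge0.
        have : 0 <= (k : nat)%:R :> R by rewrite ler0n.
        lra.
      by apply: addr_ge0; rewrite ler0n.
    have : (f v - (p + 1/2)) ^+ 2 <= 1/4.
      rewrite expr2; nra.
    lra.
  have h1 := sqlem (K := K) (d := f v - p - 1) ltac:(lra) ltac:(lra).
  have h2 := hge (f v - p - 1) (fun k hk => introT orP (or_intror
     (ltac:(rewrite inE; lra) : v \in U k))).
  have -> : (f v - (p + 1/2)) ^+ 2 = (f v - p - 1 + 1/2) ^+ 2 by field.
  lra.
have B0 : 0 <= B by rewrite /B; apply: addr_ge0 => //; apply: mulr_ge0; lra.
have hsum : \sum_(v : V) (f v - (p + 1/2)) ^+ 2 <= n / 4 + 16 * B.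
  apply: le_trans (ler_sum _ (fun v _ => hpt v)) _.
  rewrite big_split /= sumr_const (_ : #|xpredT| = #|V|) //.
  rewrite exchange_big /=.
  have -> : \sum_(k < K) \sum_(v : V) g v k
      = \sum_(k < K) (2 * (k : nat)%:R + 2) * (#|L k|%:R + #|U k|%:R).
    apply: eq_bigr => k _; rewrite /g -mulr_sumr big_split /= !sum_ind //.
  have -> : (1/4) *+ #|V| = n / 4 :> R by rewrite -mulr_natr mulrC mul1r.
  rewrite lerD2l.
  apply: le_trans (_ : \sum_(k < K) (2 * B) * ((2 * (k : nat)%:R + 2) * beta^-1 ^+ (k : nat)) <= _).
    apply: ler_sum => k _.
    have k0 : 0 <= (k : nat)%:R :> R by rewrite ler0n.
    have h1 := hx _ _ (hLk k); have h2 := hx _ _ (hUk k).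
    rewrite mulrCA; apply: ler_wpM2l; first lra.
    rewrite mulrC; lra.
  rewrite -mulr_sumr.
  have := geom (ltW xp) ltac:(lra) K.
  have : 0 <= (4 * K%:R + 8) * beta^-1 ^+ K.
    apply: mulr_ge0; last by rewrite exprn_ge0 // ltW.
    have : 0 <= K%:R :> R by rewrite ler0n.
    lra.
  move=> h3 h4.
  have : \sum_(k < K) (2 * (k : nat)%:R + 2) * beta^-1 ^+ (k : nat) <= 8 by lra.
  move=> h5; nra.
rewrite /variance -/n.
have hv := var_le f (p + 1/2) nposN.
have nn0 : n != 0 by rewrite gt_eqF.
apply: le_trans (_ : (n / 4 + 16 * B) / n <= _).
  apply: ler_wpM2r; [by rewrite invr_ge0 | lra].
rewrite le_eqVlt; apply/orP; left; apply/eqP; rewrite /B; field.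
by apply/andP; split.
Qed.

End Helpers.

From mathcomp Require Import ring lra.

Theorem lemma5p5 (R : realType) :
  forall eps : R, 0 < eps ->
  exists beta : R, 1 < beta /\
  exists n0 : nat,
  forall (V : finType) (e : rel V),
    simple_graph e -> (n0 <= #|V|)%N ->
    has_expansion e beta beta^-1 ->
    (spr R e < (1 / 4 + eps)%:E)%E.
Proof.
move=> eps ep.
have en0 : eps != 0 by rewrite gt_eqF.
have ie : 0 < eps^-1 by rewrite invr_gt0.
pose beta := 4 + 64 / eps.
have b4 : 4 <= beta.
  rewrite /beta; have : 0 <= 64 / eps by apply: mulr_ge0; lra.
  lra.
exists beta; split; first lra.
have bp : 0 < beta by lra.
pose M := 64 * beta / eps + 4 * beta.
have M0 : 0 <= M.
  rewrite /M; apply: addr_ge0; last lra.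
  apply: mulr_ge0; [lra | exact: ltW].
exists (Num.truncn M).+1 => V e _ hn hexp.
have nM : M < #|V|%:R.
  apply: lt_le_trans (truncnS_gt M) _; by rewrite ler_nat.
have nb : 4 * beta <= #|V|%:R.
  have : 0 <= 64 * beta / eps by apply: mulr_ge0; [lra | exact: ltW].
  rewrite /M in nM; lra.
have npos : 0 < #|V|%:R :> R by lra.
have h1 : beta^-1 <= eps / 64.
  rewrite -[beta^-1]mul1r ler_pdivrMr //.
  have -> : eps / 64 * beta = eps / 16 + 1 by rewrite /beta; field.
  lra.
have h2 : beta / #|V|%:R <= eps / 64.
  rewrite ler_pdivrMr //.
  have : 64 * beta / eps < #|V|%:R.
    have : 0 <= 4 * beta by lra.
    rewrite /M in nM; lra.
  move=> h; have := h; rewrite -(ltr_pM2l (_ : 0 < eps / 64)); last first.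
    by apply: divr_gt0.
  have -> : eps / 64 * (64 * beta / eps) = beta by field.
  lra.
have ub : (spr R e <= (1/4 + eps/2)%:E)%E.
  apply: ge_ereal_sup => x [f lf <-].
  rewrite lee_fin; apply: le_trans (Helpers.var_bound b4 nb hexp lf) _.
  lra.
apply: le_lt_trans ub _; rewrite lte_fin; lra.
Qed.
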